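(* Consider the execution of Greedy Dual on any MPMD or MBPMD instance. For any request $u$ and any time $\tau\ge\mathrm{atime}(u)$, $$\sum_{S:\,u\in S} y_S(\tau)\le \tau-\mathrm{atime}(u),$$ and equality holds if $u$ is still free (unmatched) at time $\tau$.
   Context: Problem (MPMD / MBPMD). Let $(\mathcal{X},\mathrm{dist})$ be a metric space. An instance consists of $2m$ requests $u_1,\dots,u_{2m}$. Each request $u$ is a triple $(\mathrm{pos}(u),\mathrm{atime}(u),\mathrm{sgn}(u))$, where $\mathrm{pos}(u)\in\mathcal{X}$ is its location and $\mathrm{atime}(u)\ge0$ is its arrival time, with arrival times nondecreasing. In MPMD, $\mathrm{sgn}(u)=0$ for all requests. In MBPMD, exactly $m$ requests have sign $+1$ and $m$ have sign $-1$. At time $\tau$, an algorithm may match two arrived, unmatched requests $u,v$ with $\mathrm{sgn}(u)=-\mathrm{sgn}(v)$, at cost $\mathrm{dist}(\mathrm{pos}(u),\mathrm{pos}(v))$ (connection cost) plus $(\tau-\mathrm{atime}(u))+(\tau-\mathrm{atime}(v))$ (waiting costs). All requests must eventually be matched. Notation. Edges are unordered pairs $\{u,v\}$ of distinct requests with $\mathrm{sgn}(u)=-\mathrm{sgn}(v)$. For a set $S$ of requests, $\delta(S)$ is the set of edges with exactly one endpoint in $S$. In MPMD, $\mathrm{sur}(S)=|S|\bmod 2$; in MBPMD, $\mathrm{sur}(S)=|\sum_{u\in S}\mathrm{sgn}(u)|$. For an edge $e=(u,v)$, $\mathrm{cost}(e)=\mathrm{dist}(\mathrm{pos}(u),\mathrm{pos}(v))+|\mathrm{atime}(u)-\mathrm{atime}(v)|$.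 Algorithm Greedy Dual (GD). GD maintains a dual variable $y_S\ge0$ for every set $S$ of already-arrived requests; $y_S(\tau)$ denotes its value at time $\tau$. It also maintains a partition of the arrived requests into active sets, with $\mathcal{A}(u)$ denoting the active set containing $u$. An active set is growing if it contains at least one free request, and non-growing otherwise. - When a request $u$ arrives, $\mathcal{A}(u)\leftarrow\{u\}$ becomes a new active set, and $y_S\leftarrow 0$ for every new set $S$ containing $u$. - Tight-constraint event: while there is an edge $e=(u,v)$ between arrived requests with $\mathcal{A}(u)\neq\mathcal{A}(v)$ and $\sum_{S:\,e\in\delta(S)}y_S=\mathrm{cost}(e)$, GD does the following. It merges the two sets: $S=\mathcal{A}(u)\cup\mathcal{A}(v)$ becomes active and $\mathcal{A}(w)\leftarrow S$ for all $w\in S$, while $\mathcal{A}(u)$ and $\mathcal{A}(v)$ become inactive. It marks the edge $e$. Then, while there are free $u',v'\in S$ with $\mathrm{sgn}(u')=-\mathrm{sgn}(v')$, it matches $u'$ with $v'$ at the current time. - At all other times, $y_S$ increases continuously at rate $1$ (the same rate as time) for every active growing set $S$; all other dual variables stay constant. *)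

(* Defs.v *)
(* Greedy Dual (GD) for MPMD / MBPMD, modelled as a
   small-step transition system over states at event times. *)
From HB Require Import structures.
From mathcomp Require Import all_boot all_order all_algebra.
Set Implicit Arguments. Unset Strict Implicit. Unset Printing Implicit Defensive.
Import Order.TTheory GRing.Theory Num.Theory.
Local Open Scope ring_scope.

Definition is_metric (R : realFieldType) (X : Type) (dist : X -> X -> R) : Prop :=
  (forall x y, 0 <= dist x y) /\
  (forall x y, dist x y = 0 <-> x = y) /\
  (forall x y, dist x y = dist y x) /\
  (forall x y z, dist x z <= dist x y + dist y z).

(* An instance with 2m requests, indexed by 'I_(2*m) in arrival order. *)
Record instance (R : realFieldType) (X : Type) (m : nat) := Instance {
  pos   : 'I_(2 * m) -> X;
  atime : 'I_(2 * m) -> R;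
  sgn   : 'I_(2 * m) -> int }.

Definition is_MPMD R X m (I : instance R X m) : Prop :=
  forall u, sgn I u = 0%R.

Definition is_MBPMD R X m (I : instance R X m) : Prop :=
  (forall u, sgn I u = 1%R \/ sgn I u = (-1)%R) /\
  #|[set u | sgn I u == 1%R]| = m /\ #|[set u | sgn I u == (-1)%R]| = m.

Definition valid_instance R X m (I : instance R X m) : Prop :=
  (forall u, 0 <= atime I u) /\
  (forall u v : 'I_(2 * m), (u <= v)%N -> atime I u <= atime I v) /\
  (is_MPMD I \/ is_MBPMD I).

Section GD.
Variables (R : realFieldType) (X : Type) (dist : X -> X -> R) (m : nat).
Variable (I : instance R X m).
Local Notation req := 'I_(2 * m).

Definition is_edge (u v : req) : Prop := u <> v /\ sgn I u = - sgn I v.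

Definition cost (u v : req) : R :=
  dist (pos I u) (pos I v) + `|atime I u - atime I v|.

(* sum of y_S over the sets S with {u,v} in delta(S) *)
Definition dsum (y : {set req} -> R) (u v : req) : R :=
  \sum_(S : {set req} | (u \in S) != (v \in S)) y S.

Record state := State {
  st_time    : R;
  st_arr     : {set req};
  st_y       : {set req} -> R;
  st_act     : req -> {set req};    (* A(u), meaningful for arrived u *)
  st_matched : {set req};
  st_M       : seq (req * req * R); (* matched pairs with matching time *)
  st_pend    : option {set req}     (* Some S: inside the matching loop
                                       after merging into S *) }.

Definition active (s : state) (S : {set req}) : bool :=
  [exists w, (w \in st_arr s) && (st_act s w == S)].

Definition growing (s : state) (S : {set req}) : bool :=
  [exists w in S, w \notin st_matched s].

Definition init_state : state :=
  State 0 set0 (fun _ => 0) (fun _ => set0) set0 [::] None.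

Inductive gd_step : state -> state -> Prop :=
| step_arrive (s : state) (u : req) :
    st_pend s = None ->
    u \notin st_arr s ->
    atime I u = st_time s ->
    (forall v : req, (v < u)%N -> v \in st_arr s) ->
    gd_step s
      (State (st_time s) (u |: st_arr s)
             (fun S => if u \in S then 0 else st_y s S)
             (fun w => if w == u then [set u] else st_act s w)
             (st_matched s) (st_M s) None)
(* tight-constraint event on edge (u,v): merge the two active sets *)
| step_merge (s : state) (u v : req) :
    st_pend s = None ->
    u \in st_arr s -> v \in st_arr s ->
    is_edge u v ->
    st_act s u != st_act s v ->
    dsum (st_y s) u v = cost u v ->
    let S := st_act s u :|: st_act s v in
    gd_step s
      (State (st_time s) (st_arr s) (st_y s)
             (fun w => if w \in S then S else st_act s w)
             (st_matched s) (st_M s) (Some S))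
| step_match (s : state) (S : {set req}) (u v : req) :
    st_pend s = Some S ->
    u \in S -> v \in S ->
    u \notin st_matched s -> v \notin st_matched s ->
    is_edge u v ->
    gd_step s
      (State (st_time s) (st_arr s) (st_y s) (st_act s)
             (u |: (v |: st_matched s)) ((u, v, st_time s) :: st_M s)
             (Some S))
| step_endmatch (s : state) (S : {set req}) :
    st_pend s = Some S ->
    (forall u v : req, u \in S -> v \in S ->
       u \notin st_matched s -> v \notin st_matched s -> ~ is_edge u v) ->
    gd_step s
      (State (st_time s) (st_arr s) (st_y s) (st_act s)
             (st_matched s) (st_M s) None)
(* continuous growth during [tau, tau + d]: every active growing set
   increases at rate 1, no arrival and no tight edge occurs inside *)
| step_grow (s : state) (d : R) :
    st_pend s = None ->
    0 < d ->
    (forall v : req, atime I v <= st_time s -> v \in st_arr s) ->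
    (forall v : req, v \notin st_arr s -> st_time s + d <= atime I v) ->
    (forall u v : req, u \in st_arr s -> v \in st_arr s -> is_edge u v ->
       st_act s u != st_act s v -> dsum (st_y s) u v < cost u v) ->
    let y' := fun S => if active s S && growing s S then st_y s S + d
                       else st_y s S in
    (forall u v : req, u \in st_arr s -> v \in st_arr s -> is_edge u v ->
       st_act s u != st_act s v -> dsum y' u v <= cost u v) ->
    gd_step s
      (State (st_time s + d) (st_arr s) y' (st_act s)
             (st_matched s) (st_M s) None).

Inductive gd_reachable : state -> Prop :=
| reach_init : gd_reachable init_state
| reach_step s s' : gd_reachable s -> gd_step s s' -> gd_reachable s'.

End GD.

(* Main.v *)
Require Import Defs.
From HB Require Import structures.
From mathcomp Require Import all_boot all_order all_algebra.
From mathcomp Require Import lra.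
Import Order.TTheory GRing.Theory Num.Theory.
Local Open Scope ring_scope.

Section Aux.
Variables (R : realFieldType) (X : Type) (dist : X -> X -> R) (m : nat)
    (I : instance R X m).

Definition ysum (s : state R m) (u : 'I_(2 * m)) : R :=
  \sum_(S : {set 'I_(2 * m)} | u \in S) st_y s S.

Definition Inv (s : state R m) : Prop :=
 [/\ (forall v, v \notin st_arr s -> st_time s <= atime I v),
     (forall S : {set 'I_(2 * m)}, ~~ (S \subset st_arr s) -> st_y s S = 0),
     (forall w, w \in st_arr s -> w \in st_act s w /\ st_act s w \subset st_arr s),
     (forall w x, w \in st_arr s -> x \in st_act s w -> st_act s x = st_act s w) &
     (forall u, u \in st_arr s -> ysum s u <= st_time s - atime I u /\
        (u \notin st_matched s -> ysum s u = st_time s - atime I u))].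

Lemma inv_reach s : valid_instance I -> gd_reachable dist I s -> Inv s.
Proof.
move=> [hpos _] hr; elim: hr => {s} [|s s' _ IH st].
  split => /=; first by move=> v _; rewrite /init_state /=; exact: hpos.
  - by move=> S _.
  - by move=> w; rewrite in_set0.
  - by move=> w x; rewrite in_set0.
  - by move=> w; rewrite in_set0.
case: st IH => {s s'}.
- move=> s u _ unot hat hlt [H1 H2 H3 H4 H5]; split => /=.
  + by move=> v; rewrite in_setU1 negb_or => /andP [_ ]; exact: H1.
  + move=> S nsub; case: ifP => // uS; apply: H2; apply: contra nsub => sub.
    by apply: (subset_trans sub); apply: subsetUr.
  + move=> w; case: eqP => [-> _|/eqP wu]; first by rewrite set11 sub1set setU11.
    rewrite in_setU1 (negbTE wu) /= => /H3 [? ?]; split => //.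
    by apply: (subset_trans _ (subsetUr _ _)).
  + move=> w x; case: eqP => [-> _|/eqP wu].
      by rewrite in_set1 => /eqP ->; rewrite eqxx.
    rewrite in_setU1 (negbTE wu) /= => wa xa.
    have xar : x \in st_arr s by have [_ /subsetP] := H3 w wa; apply.
    have -> : (x == u) = false by apply/negP => /eqP xu; rewrite -xu xar in unot.
    exact: H4.
  + move=> w; rewrite /ysum /=; case: (eqVneq w u) => [-> _|wu].
      rewrite big1 ?hat ?subrr //; last by move=> S ->.
    rewrite in_setU1 (negbTE wu) /= => wa.
    have -> : \sum_(S : {set 'I_(2 * m)} | w \in S) (if u \in S then 0 else st_y s S) =
              \sum_(S : {set 'I_(2 * m)} | w \in S) st_y s S.
      apply: eq_bigr => S _; case: ifP => // uS; symmetry; apply: H2.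
      apply/negP => /subsetP /(_ u uS); by rewrite (negbTE unot).
    exact: H5.
- move=> s u v _ ua va _ _ _ S [H1 H2 H3 H4 H5]; split => //=.
  + move=> w wa; case: ifP => wS; first by split => //; rewrite /S subUset
      (proj2 (H3 u ua)) (proj2 (H3 v va)).
    exact: H3.
  + move=> w x wa; case: ifP => wS.
      by move=> xS; rewrite xS.
    move=> xw; case: ifP => xS; last by apply: H4.
    exfalso; move: wS; rewrite /S in_setU => /negP; apply.
    move: xS; rewrite /S in_setU => /orP [xu|xv].
      by rewrite -(H4 _ _ ua xu) (H4 _ _ wa xw) (proj1 (H3 w wa)).
    by rewrite -(H4 _ _ va xv) (H4 _ _ wa xw) (proj1 (H3 w wa)) orbT.
- move=> s S u v _ _ _ _ _ _ [H1 H2 H3 H4 H5]; split => //= w wa.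
  have [h1 h2] := H5 w wa; split => // wm; apply: h2.
  by apply: contra wm => wm; rewrite !in_setU1 wm !orbT.
- by move=> s S _ _ [H1 H2 H3 H4 H5]; split.
- move=> s d _ dpos _ hna _ y' _ [H1 H2 H3 H4 H5]; split => //=.
  + move=> S nsub; rewrite /y'; case: ifP => [/andP [/existsP [w /andP [wa /eqP wS]] _]|_].
      by move: nsub; rewrite -wS (proj2 (H3 w wa)).
    exact: H2.
  + move=> u ua; rewrite /ysum /=.
    have uu := proj1 (H3 u ua).
    rewrite (bigD1 (st_act s u)) //=.
    have -> : \sum_(i : {set 'I_(2 * m)} | (u \in i) && (i != st_act s u)) y' i =
              \sum_(i : {set 'I_(2 * m)} | (u \in i) && (i != st_act s u)) st_y s i.
      apply: eq_bigr => S /andP [uS nS]; rewrite /y'; case: ifP => //.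
      case/andP => /existsP [w /andP [wa /eqP wS]] _.
      have e : st_act s u = st_act s w by apply: H4 => //; rewrite wS.
      by move: nS; rewrite -wS -e eqxx.
    have [h1 h2] := H5 u ua; move: h1 h2; rewrite /ysum.
    rewrite (bigD1 (st_act s u) (P := fun S => u \in S)) //= => h1 h2.
    rewrite /y'; have actu : active s (st_act s u).
      by apply/existsP; exists u; rewrite ua eqxx.
    rewrite actu /=; case: ifP => gr.
      split; first by lra.
      by move=> um; have := h2 um; lra.
    split; first by lra.
    move=> um; have : growing s (st_act s u).
      by apply/existsP; exists u; rewrite uu um.
    by rewrite gr.
Qed.

End Aux.

Theorem lemma2 (R : realFieldType) (X : Type) (dist : X -> X -> R) (m : nat)
    (I : instance R X m) :
  is_metric dist -> valid_instance I ->
  forall s : state R m, gd_reachable dist I s ->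
  forall u : 'I_(2 * m), atime I u <= st_time s ->
    (\sum_(S : {set 'I_(2 * m)} | u \in S) st_y s S <= st_time s - atime I u) /\
    (u \notin st_matched s ->
       \sum_(S : {set 'I_(2 * m)} | u \in S) st_y s S = st_time s - atime I u).
Proof.
move=> _ hv s hr u hu.
have [H1 H2 _ _ H5] := @inv_reach _ _ dist _ I s hv hr.
case ua: (u \in st_arr s); first exact: H5.
have e : atime I u = st_time s.
  by apply/eqP; rewrite eq_le hu H1 ?ua.
have -> : \sum_(S : {set 'I_(2 * m)} | u \in S) st_y s S = 0.
  apply: big1 => S uS; apply: H2; apply/negP => /subsetP /(_ u uS).
  by rewrite ua.
by rewrite e subrr.
Qed.
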